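(* Let $\alpha$ be a set and $\odot:\alpha\times\alpha\to\alpha$. Calls $\mathrm{treeReduce}(\odot,\mathit{rdd})$ have deterministic outcomes if and only if calls $\mathrm{reduce}(\odot,\mathit{rdd})$ have deterministic outcomes.
   Context: Lists are finite; $\mathbin{+\!\!+}$ is concatenation. $\mathrm{foldl}(f,b,[\,])=b$, $\mathrm{foldl}(f,b,[x_1,\dots,x_n])=f(\cdots f(f(b,x_1),x_2)\cdots,x_n)$; $\mathrm{reducel}(f,[x_1,\dots,x_n])=\mathrm{foldl}(f,x_1,[x_2,\dots,x_n])$ for nonempty lists. An RDD is a list of lists. A partitioning is a function $P$ sending each nonempty list $L$ to an RDD obtained by splitting $L$ into consecutive nonempty pieces $p_1,\dots,p_n$ with $p_1\mathbin{+\!\!+}\cdots\mathbin{+\!\!+}p_n=L$ and then arbitrarily permuting $[p_1,\dots,p_n]$. $\mathrm{reduce}_{\mathrm{det}}(\odot,[q_1,\dots,q_m])=\mathrm{reducel}(\odot,[\mathrm{reducel}(\odot,q_1),\dots,\mathrm{reducel}(\odot,q_m)])$; calls to $\mathrm{reduce}$ have deterministic outcomes if $\mathrm{reduce}_{\mathrm{det}}(\odot,P(L))=\mathrm{reducel}(\odot,L)$ for all nonempty $L$ and all partitionings $P$. An instantiation of $\mathrm{apply}$ is any deterministic procedure which, given $\odot$ and a nonempty list $[r_1,\dots,r_m]$, returns the value obtained by repeatedly replacing two adjacent elements $l',r'$ of the current list by $l'\odot r'$ until one element remains. $\mathrm{treeReduce}_{\mathrm{bt}}(\mathrm{apply},\odot,[q_1,\dots,q_m])=\mathrm{apply}(\odot,[\mathrm{reducel}(\odot,q_1),\dots,\mathrm{reducel}(\odot,q_m)])$.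 Calls $\mathrm{treeReduce}(\odot,\mathit{rdd})$ have deterministic outcomes if $\mathrm{treeReduce}_{\mathrm{bt}}(\mathrm{apply},\odot,P(L))=\mathrm{reducel}(\odot,L)$ for all nonempty lists $L$, partitionings $P$, and instantiations $\mathrm{apply}$. *)

(* Defs.v *)
From Stdlib Require Import List Permutation.
Import ListNotations.
Set Implicit Arguments.

Section Defs.
Variable A : Type.

Definition reducel (f : A -> A -> A) (l : list A) : option A :=
  match l with
  | [] => None
  | x :: xs => Some (fold_left f xs x)
  end.

Fixpoint all_some (l : list (option A)) : option (list A) :=
  match l with
  | [] => Some []
  | None :: _ => None
  | Some x :: r =>
      match all_some r with Some r' => Some (x :: r') | None => None end
  end.

Definition is_partitioning (P : list A -> list (list A)) : Prop :=
  forall L : list A, L <> [] ->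
    exists ps : list (list A),
      Forall (fun p => p <> []) ps /\ concat ps = L /\ Permutation ps (P L).

Definition reduce_det (f : A -> A -> A) (rdd : list (list A)) : option A :=
  match all_some (map (reducel f) rdd) with
  | Some rs => reducel f rs
  | None => None
  end.

Definition reduce_deterministic (f : A -> A -> A) : Prop :=
  forall P, is_partitioning P ->
  forall L : list A, L <> [] -> reduce_det f (P L) = reducel f L.

Inductive merges (f : A -> A -> A) : list A -> A -> Prop :=
  | merges_one : forall x, merges f [x] x
  | merges_step : forall l1 l2 x y v,
      merges f (l1 ++ f x y :: l2) v -> merges f (l1 ++ x :: y :: l2) v.

Definition is_apply (apply : (A -> A -> A) -> list A -> option A) : Prop :=
  forall (f : A -> A -> A) (rs : list A), rs <> [] ->
    exists v, apply f rs = Some v /\ merges f rs v.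

Definition treeReduce_bt (apply : (A -> A -> A) -> list A -> option A)
    (f : A -> A -> A) (rdd : list (list A)) : option A :=
  match all_some (map (reducel f) rdd) with
  | Some rs => apply f rs
  | None => None
  end.

Definition treeReduce_deterministic (f : A -> A -> A) : Prop :=
  forall P, is_partitioning P ->
  forall apply, is_apply apply ->
  forall L : list A, L <> [] -> treeReduce_bt apply f (P L) = reducel f L.

End Defs.

(* Main.v *)
Require Import Defs.
From Stdlib Require Import List Permutation.
Import ListNotations.

Lemma merges_fold (A : Type) (f : A -> A -> A) xs x :
  merges f (x :: xs) (fold_left f xs x).
Proof.
  revert x; induction xs as [|y xs IH]; intros x; simpl.
  - constructor.
  - apply (@merges_step A f [] xs x y). apply IH.
Qed.

Lemma merges_reducel (A : Type) (f : A -> A -> A)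
  (assoc : forall a b c, f a (f b c) = f (f a b) c) l v :
  merges f l v -> reducel f l = Some v.
Proof.
  induction 1; simpl; auto.
  rewrite <- IHmerges. destruct l1 as [|a l1]; simpl; auto.
  rewrite !fold_left_app. simpl. rewrite assoc. reflexivity.
Qed.

Lemma all_some_len (A B : Type) (g : B -> option A) l rs :
  all_some (map g l) = Some rs -> length rs = length l.
Proof.
  revert rs; induction l as [|b l IH]; intros rs H; simpl in *.
  - inversion H; auto.
  - destruct (g b); [|discriminate].
    destruct (all_some (map g l)) eqn:E; [|discriminate].
    inversion H; subst. simpl. f_equal. auto.
Qed.

Definition P3 (A : Type) (L : list A) : list (list A) :=
  match L with
  | [x; y; z] => [[x]; [y; z]]
  | _ => [L]
  end.

Lemma P3_part (A : Type) : is_partitioning (@P3 A).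
Proof.
  intros L HL.
  destruct L as [|x [|y [|z [|w t]]]]; try congruence.
  - exists [[x]]; split; [repeat constructor; congruence | split; [simpl; rewrite ?app_nil_r; reflexivity | apply Permutation_refl]].
  - exists [[x; y]]; split; [repeat constructor; congruence | split; [simpl; rewrite ?app_nil_r; reflexivity | apply Permutation_refl]].
  - exists [[x]; [y; z]]; split; [repeat constructor; congruence | split; [simpl; rewrite ?app_nil_r; reflexivity | apply Permutation_refl]].
  - exists [x :: y :: z :: w :: t]; split; [repeat constructor; congruence | split; [simpl; rewrite ?app_nil_r; reflexivity | apply Permutation_refl]].
Qed.

Theorem proposition2 (A : Type) (f : A -> A -> A) :
  treeReduce_deterministic f <-> reduce_deterministic f.
Proof.
  split.
  - intros H P HP L HL.
    rewrite <- (H P HP (fun g rs => reducel g rs)); auto.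
    intros g rs Hrs. destruct rs as [|x xs]; [congruence|].
    exists (fold_left g xs x); split; auto. apply merges_fold.
  - intros H P HP apply Happ L HL.
    assert (assoc : forall a b c, f a (f b c) = f (f a b) c).
    { intros a b c. pose proof (H _ (P3_part A) [a; b; c]) as E.
      specialize (E ltac:(discriminate)). simpl in E. injection E; auto. }
    rewrite <- (H P HP L HL).
    unfold treeReduce_bt, reduce_det.
    destruct (all_some (map (reducel f) (P L))) as [rs|] eqn:E; auto.
    assert (rs <> []).
    { apply all_some_len in E. destruct (HP L HL) as [ps [_ [Hc Hp]]].
      apply Permutation_length in Hp. intro; subst rs.
      destruct ps; simpl in *; congruence. }
    destruct (Happ f rs H0) as [v [Hv Hm]]. rewrite Hv.
    symmetry. apply merges_reducel; auto.
Qed.
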